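(* Let $p$ be an odd prime, $\tau\in\mathbb{Z}$, and let $m=p^\alpha a$, $l=p^\beta b$ with positive integers $a,b$ such that $p\nmid a$, $p\nmid b$, and integers $\alpha\ge1$, $\beta\ge0$. Then $$p^{2\alpha}\ \Big|\ \binom{m}{l}\binom{m\tau+l-1}{m-1}-\binom{m/p}{l/p}\binom{\frac{m\tau+l}{p}-1}{\frac{m}{p}-1},$$ where, when $\beta=0$, the second term is defined to be zero.
   Context: For integers $b\geq 0$ and $a\in\mathbb{Z}$ the binomial coefficient is defined by: $\binom{a}{b}=1$ if $b=0$; $\binom{a}{b}$ is the usual binomial coefficient if $b\geq 1$ and $a\geq 0$; and $\binom{a}{b}=(-1)^b\binom{-a+b-1}{b}$ if $b\geq1$ and $a<0$. *)

(* Defs.v *)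
From mathcomp Require Import all_boot all_order all_algebra.
Set Implicit Arguments. Unset Strict Implicit. Unset Printing Implicit Defensive.
Import Order.TTheory GRing.Theory Num.Theory.
Local Open Scope ring_scope.

Definition binZ (x : int) (k : nat) : int :=
  if k == 0%N then 1
  else if 0 <= x then ('C(`|x|%N, k))%:Z
  else (-1) ^+ k * ('C((`|x| + k - 1)%N, k))%:Z.

(* Main.v *)
Require Import Defs.
From mathcomp Require Import all_boot all_order all_algebra.
Import Order.TTheory GRing.Theory Num.Theory.
Local Open Scope ring_scope.

From mathcomp Require Import zify ring lra.

Lemma binZ_pos k n : binZ (Posz k) n = ('C(k, n))%:Z.
Proof. by rewrite /binZ; case: n => //=; rewrite bin0. Qed.

Lemma binZ_neg k n : binZ (Negz k) n = (-1) ^+ n * ('C(k + n, n))%:Z.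
Proof.
rewrite /binZ; case: n => [|n] /=; first by rewrite bin0 expr0 mulr1.
by rewrite addSn subn1.
Qed.

Lemma binZ_abs (n : nat) (w : int) :
  (n.+1)%:Z * binZ w n.+1 = w * binZ (w - 1) n.
Proof.
case: w => [k|k].
- case: k => [|k].
    by rewrite binZ_pos bin0n mulr0 mul0r.
  have -> : (Posz k.+1 - 1) = Posz k by rewrite subzn // subn1.
  rewrite !binZ_pos -!PoszM; congr Posz.
  by rewrite -(mul_bin_diag k.+1 n).
- have -> : (Negz k - 1) = Negz k.+1 by rewrite !NegzE; lia.
  rewrite !binZ_neg NegzE.
  have := mul_bin_left (k.+1 + n) n.
  have -> : (k.+1 + n - n = k.+1)%N by lia.
  rewrite addSn -addnS => h.
  have hz : (n.+1)%:Z * ('C(k + n.+1, n.+1))%:Z = (k.+1)%:Z * ('C(k + n.+1, n))%:Z.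
    by rewrite -!PoszM h.
  rewrite exprS.
  transitivity (- (-1) ^+ n * ((n.+1)%:Z * ('C(k + n.+1, n.+1))%:Z)); first by ring.
  rewrite hz; ring.
Qed.

Lemma binZ_prod w n : binZ w n * (n`!)%:Z = \prod_(i < n) (w - i%:Z).
Proof.
elim: n w => [|n IH] w; first by rewrite big_ord0 /binZ /= mul1r.
rewrite factS PoszM mulrCA mulrA binZ_abs -mulrA IH.
rewrite big_ord_recl /= subr0; congr (_ * _); apply: eq_bigr => i _.
by rewrite /bump leq0n add1n -addn1 PoszD; ring.
Qed.

Definition Gp (p R : nat) (f : nat -> int) : int :=
  \prod_(j < R) \prod_(k < p.-1) f (p * j + k.+1)%N.

Lemma split_prod p R (f : nat -> int) : (0 < p)%N -> (0 < R)%N ->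
  \prod_(i < p * R - 1) f i.+1 = (\prod_(i < R.-1) f (p * i.+1)%N) * Gp p R f.
Proof.
case: p => // p _; case: R => // R _.
elim: R => [|R IH].
  rewrite /Gp big_ord0 mul1r big_ord1 muln1 subn1 /=.
  by apply: eq_bigr => i _; rewrite muln0 add0n.
have h1 : (0 < p.+1 * R.+1)%N by rewrite muln_gt0.
rewrite (_ : (p.+1 * R.+2 - 1 = (p.+1 * R.+1 - 1) + p.+1)%N); last first.
  by rewrite [(p.+1 * R.+2)%N]mulnS; lia.
rewrite big_split_ord /= IH big_ord_recl /=.
rewrite /Gp [in RHS]big_ord_recr /= [in RHS]big_ord_recr /=.
have e0 : ((p.+1 * R.+1 - 1 + 0).+1 = p.+1 * R.+1)%N by lia.
rewrite e0.
have e1 : \prod_(i < p) f (p.+1 * R.+1 - 1 + bump 0 i).+1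
        = \prod_(k < p) f (p.+1 * R.+1 + k.+1)%N.
  by apply: eq_bigr => i _; congr f; rewrite /bump leq0n; lia.
rewrite e1 /=.
set A := \prod_(i < R) _. set B := \prod_(i < R.+1) _.
ring.
Qed.

Lemma Gp_neg p R : odd p -> Gp p R (fun i => 0 - i%:Z) = Gp p R (fun i => i%:Z).
Proof.
move=> hp; rewrite /Gp; apply: eq_bigr => j _.
rewrite (eq_bigr (fun k : 'I_p.-1 => - (p * j + k.+1)%N%:Z)); last by move=> k _; rewrite sub0r.
rewrite prodrN card_ord -signr_odd.
case: p hp => // p /= hp; rewrite (negbTE hp) expr0 mul1r //.
Qed.

Lemma Gp_sym p R : odd p ->
  Gp p R (fun i => (p * R)%N%:Z - i%:Z) = Gp p R (fun i => i%:Z).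
Proof.
move=> hp; rewrite /Gp (reindex_inj rev_ord_inj); apply: eq_bigr => j _.
rewrite (reindex_inj rev_ord_inj); apply: eq_bigr => k _ /=.
have hj := ltn_ord j; have hk := ltn_ord k.
have h1 : (p * j + p <= p * R)%N by rewrite addnC -mulnS leq_mul2l ltn_ord orbT.
have e : (p * R = p * (R - j.+1) + (p.-1 - k.+1).+1 + (p * j + k.+1))%N.
  rewrite mulnBr mulnS.
  have p0 : (0 < p)%N by rewrite lt0n; apply: contraTneq hp => ->.
  move: hk; rewrite -ltnS prednK // => hk.
  lia.
rewrite e PoszD; ring.
Qed.

Lemma expand_seq (I : Type) (s : seq I) (phi : I -> int -> int) :
  (forall j, exists c, forall y, exists q, phi j y = phi j 0 + y * c + y ^+ 2 * q) ->
  exists c, forall y, exists q,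
    \prod_(j <- s) phi j y = \prod_(j <- s) phi j 0 + y * c + y ^+ 2 * q.
Proof.
move=> H; elim: s => [|j s [c IH]].
  by exists 0 => y; exists 0; rewrite !big_nil; ring.
have [c1 Hj] := H j.
exists (phi j 0 * c + (\prod_(i <- s) phi i 0) * c1) => y.
have [q1 E1] := Hj y; have [q2 E2] := IH y.
exists (phi j 0 * q2 + c1 * c + y * c1 * q2 + q1 * (\prod_(i <- s) phi i 0) + y * q1 * c + y ^+ 2 * q1 * q2).
rewrite !big_cons E1 E2; ring.
Qed.

Lemma expandG p R : exists c, forall y, exists q,
  Gp p R (fun i => y - i%:Z) = Gp p R (fun i => 0 - i%:Z) + y * c + y ^+ 2 * q.
Proof.
rewrite /Gp.
apply: (@expand_seq _ _ (fun (j : 'I_R) y => \prod_(k < p.-1) (y - (p * j + k.+1)%N%:Z))) => j.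
apply: (@expand_seq _ _ (fun (k : 'I_p.-1) y => (y - (p * j + k.+1)%N%:Z))) => k.
by exists 1 => y; exists 0; ring.
Qed.

Lemma binZ_U w n : binZ (w - 1) n * (n`!)%:Z = \prod_(i < n) (w - (i.+1)%:Z).
Proof.
rewrite binZ_prod; apply: eq_bigr => i _.
by rewrite -addn1 PoszD; ring.
Qed.

Lemma Usplit p R w : (0 < p)%N -> (0 < R)%N ->
  \prod_(i < p * R - 1) (p%:Z * w - (i.+1)%:Z)
  = (p%:Z) ^+ R.-1 * \prod_(i < R.-1) (w - (i.+1)%:Z) * Gp p R (fun i => p%:Z * w - i%:Z).
Proof.
move=> hp hR.
rewrite (@split_prod p R (fun i => p%:Z * w - i%:Z) hp hR); congr (_ * _).
rewrite (eq_bigr (fun i : 'I_R.-1 => p%:Z * (w - (i.+1)%:Z))); last first.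
  by move=> i _; rewrite PoszM; ring.
by rewrite big_split /= prodr_const card_ord.
Qed.

Lemma claimB p Y R : odd p -> (0 < R)%N ->
  binZ (p%:Z * Y - 1) (p * R - 1) * Gp p R (fun i => i%:Z)
  = binZ (Y - 1) R.-1 * Gp p R (fun i => p%:Z * Y - i%:Z).
Proof.
move=> hp hR.
have p0 : (0 < p)%N by rewrite lt0n; apply: contraTneq hp => ->.
have E1 := binZ_U (p%:Z * Y) (p * R - 1).
rewrite Usplit // -binZ_U in E1.
have E2 := binZ_U (p%:Z * R%:Z) (p * R - 1).
rewrite Usplit // -binZ_U in E2.
have hsym : Gp p R (fun i => p%:Z * R%:Z - i%:Z) = Gp p R (fun i => i%:Z).
  by rewrite -Gp_sym //; apply: eq_bigr => j _; apply: eq_bigr => k _; rewrite PoszM.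
rewrite hsym in E2.
have b1 : binZ (p%:Z * R%:Z - 1) (p * R - 1) = 1.
  by rewrite -PoszM subzn ?muln_gt0 ?p0 // binZ_pos binn.
have b2 : binZ (R%:Z - 1) R.-1 = 1.
  by rewrite subzn // binZ_pos subn1 binn.
rewrite b1 b2 !mul1r in E2.
set K := (p%:Z) ^+ R.-1 * (R.-1)`!%:Z.
have K0 : K != 0.
  by rewrite /K mulf_neq0 // ?expf_neq0 // ?pnatr_eq0 -?lt0n ?p0 // fact_gt0.
apply: (mulfI K0).
transitivity (binZ (p%:Z * Y - 1) (p * R - 1) * (K * Gp p R (fun i => i%:Z))); first by ring.
rewrite /K -E2 E1; ring.
Qed.

Lemma coprime_D p R : prime p -> coprimez p%:Z (Gp p R (fun i => i%:Z)).
Proof.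
move=> pp; rewrite /Gp; apply: (big_ind (fun x => coprimez p%:Z x)) => [|x y|j _].
- by rewrite coprimezE /= coprimen1.
- by rewrite coprimezMr => -> ->.
apply: (big_ind (fun x => coprimez p%:Z x)) => [|x y|k _].
- by rewrite coprimezE /= coprimen1.
- by rewrite coprimezMr => -> ->.
rewrite coprimezE /= prime_coprime // dvdn_addr ?dvdn_mulr // gtnNdvd //.
have := ltn_ord k; have := prime_gt0 pp; lia.
Qed.

Lemma coprime_ndvd p (x : int) : prime p -> ~~ (p%:Z %| x)%Z -> coprimez p%:Z x.
Proof. by move=> pp; rewrite coprimezE prime_coprime // dvdzE. Qed.

Lemma coprimeX p alpha (x : int) : coprimez p%:Z x -> coprimez (p ^ alpha)%N%:Z x.
Proof. by rewrite !coprimezE /=; apply: coprimeXl. Qed.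

Lemma dvd_m2 p alpha a (Z : int) :
  ((p ^ (2 * alpha))%N%:Z %| (p ^ alpha * a)%N%:Z * (p ^ alpha * a)%N%:Z * Z)%Z.
Proof.
apply: dvdz_mulr; rewrite -PoszM dvdzE /=.
by rewrite mulnACA -expnD addnn -mul2n dvdn_mulr.
Qed.

Lemma posz_neq0 n : (0 < n)%N -> n%:Z != 0.
Proof. by rewrite lt0n => h; apply: contra h => /eqP [->]. Qed.

Theorem lemma3p2 (p : nat) (tau : int) (a b alpha beta : nat) :
  prime p -> odd p -> (0 < a)%N -> (0 < b)%N ->
  ~~ (p %| a)%N -> ~~ (p %| b)%N -> (1 <= alpha)%N ->
  let m := (p ^ alpha * a)%N in
  let l := (p ^ beta * b)%N in
  ((p ^ (2 * alpha))%N%:Z %|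
     binZ m%:Z l * binZ (m%:Z * tau + l%:Z - 1) (m - 1)%N
     - (if beta == 0%N then 0
        else binZ (m %/ p)%N%:Z (l %/ p)%N
             * binZ (divz (m%:Z * tau + l%:Z) p%:Z - 1) (m %/ p - 1)%N))%Z.
Proof.
move=> pp hodd ha hb hpa hpb hal; cbv zeta.
set m := (p ^ alpha * a)%N. set l := (p ^ beta * b)%N.
have p0 := prime_gt0 pp.
set M := (p ^ alpha.-1 * a)%N.
have hm : m = (p * M)%N by rewrite /m /M mulnA -expnS prednK.
have M0 : (0 < M)%N by rewrite /M muln_gt0 expn_gt0 p0.
clearbody M.
set x := m%:Z * tau + l%:Z.
case: beta @l @x => [|beta] l x /=.
-
  rewrite subr0.
  have hl : l = b by rewrite /l expn0 mul1n.
  have hcl : coprimez p%:Z l%:Z by apply: coprime_ndvd; rewrite // dvdzE /= hl.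
  have hcx : coprimez p%:Z x.
    apply: coprime_ndvd => //; apply: contra hpb => hd.
    rewrite -hl -(dvdzE p%:Z l%:Z).
    have -> : l%:Z = x - (p%:Z * (M%:Z * tau)) by rewrite /x hm PoszM; ring.
    by apply: rpredB => //; apply: dvdz_mulr.
  have hc : coprimez (p ^ (2 * alpha))%N%:Z (l%:Z * x).
    by apply: coprimeX; rewrite coprimezMr hcl hcx.
  rewrite -(Gauss_dvdzr _ hc).
  have l0 : (0 < l)%N by rewrite hl.
  have m0 : (0 < m)%N by rewrite hm muln_gt0 p0.
  have E1 := binZ_abs l.-1 m%:Z; rewrite prednK // in E1.
  have E2 := binZ_abs m.-1 x; rewrite prednK // in E2.
  have -> : l%:Z * x * (binZ m%:Z l * binZ (x - 1) (m - 1)) =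
            m%:Z * m%:Z * (binZ (m%:Z - 1) l.-1 * binZ x m).
    rewrite subn1.
    transitivity ((l%:Z * binZ m%:Z l) * (x * binZ (x - 1) m.-1)); first by ring.
    rewrite E1 -E2; ring.
  exact: dvd_m2.
set L := (p ^ beta * b)%N.
have hl : l = (p * L)%N by rewrite /l /L mulnA -expnS.
have L0 : (0 < L)%N by rewrite /L muln_gt0 expn_gt0 p0.
clearbody L.
set X := M%:Z * tau + L%:Z.
have hx : x = p%:Z * X by rewrite /x /X hm hl !PoszM; ring.
have pz : p%:Z != 0 by apply: posz_neq0.
rewrite hx hm hl !mulKn // mulKz // !subn1 !PoszM.
set Dl := Gp p L (fun i => i%:Z).
set Dm := Gp p M (fun i => i%:Z).
have B1 := claimB p M%:Z L hodd L0; rewrite subn1 -/Dl in B1.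
have B2 := claimB p X M hodd M0; rewrite subn1 -/Dm in B2.
have El := binZ_abs (p * L).-1 (p * M)%N%:Z.
have pL : (0 < p * L)%N by rewrite muln_gt0 p0.
rewrite prednK // in El. rewrite !PoszM in El.
have EL := binZ_abs L.-1 M%:Z; rewrite prednK // in EL.
have EX := binZ_abs M.-1 X; rewrite prednK // in EX.
set A := Gp p L (fun i => p%:Z * M%:Z - i%:Z) in B1.
have B1' : binZ (p%:Z * M%:Z) (p * L) * Dl = binZ M%:Z L * A.
  have pL0 : p%:Z * L%:Z != 0 by rewrite mulf_neq0 // posz_neq0.
  apply: (mulfI pL0).
  transitivity ((p%:Z * L%:Z * binZ (p%:Z * M%:Z) (p * L)) * Dl); first by ring.
  rewrite El -mulrA B1.
  transitivity (p%:Z * (M%:Z * binZ (M%:Z - 1) L.-1) * A); first by ring.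
  rewrite -EL; ring.
have [cl Hl] := expandG p L.
have [q1 EA] := Hl (p%:Z * M%:Z).
have [ql ELl] := Hl (p%:Z * L%:Z).
rewrite Gp_neg // -/Dl -/A in EA ELl.
have symL : Gp p L (fun i => p%:Z * L%:Z - i%:Z) = Dl.
  by rewrite /Dl /Dm -Gp_sym //; apply: eq_bigr => j _; apply: eq_bigr => k _; rewrite PoszM.
rewrite symL in ELl.
have hcl : cl = - (p%:Z * L%:Z) * ql.
  have pL0 : p%:Z * L%:Z != 0 by rewrite mulf_neq0 // posz_neq0.
  apply: (mulfI pL0); apply/eqP; rewrite -subr_eq0; apply/eqP.
  have : Dl - Dl = 0 by rewrite subrr.
  rewrite {1}ELl => <-; ring.
have [cm Hm] := expandG p M.
set G' := Gp p M (fun i => p%:Z * X - i%:Z) in B2.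
have [q2 EG] := Hm (p%:Z * X).
have [qm EMm] := Hm (p%:Z * M%:Z).
rewrite Gp_neg // -/Dm -/G' in EG EMm.
have symM : Gp p M (fun i => p%:Z * M%:Z - i%:Z) = Dm.
  by rewrite /Dl /Dm -Gp_sym //; apply: eq_bigr => j _; apply: eq_bigr => k _; rewrite PoszM.
rewrite symM in EMm.
have hcm : cm = - (p%:Z * M%:Z) * qm.
  have pM0 : p%:Z * M%:Z != 0 by rewrite mulf_neq0 // posz_neq0.
  apply: (mulfI pM0); apply/eqP; rewrite -subr_eq0; apply/eqP.
  have : Dm - Dm = 0 by rewrite subrr.
  rewrite {1}EMm => <-; ring.
have hc : coprimez (p ^ (2 * alpha))%N%:Z (Dl * Dm).
  by apply: coprimeX; rewrite coprimezMr !coprime_D.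
rewrite -(Gauss_dvdzr _ hc).
set T := binZ (p%:Z * M%:Z) (p * L).
set B' := binZ (X - 1) M.-1.
set bML := binZ M%:Z L.
set bML1 := binZ (M%:Z - 1) L.-1.
set bXM := binZ X M.
set C := binZ (p%:Z * X - 1) (p * M).-1.
have -> : Dl * Dm * (T * C - bML * B') = (T * Dl) * (C * Dm) - Dl * Dm * (bML * B') by ring.
rewrite B1' B2 EA EG hcl hcm.
have FL : bML * L%:Z - M%:Z * bML1 = 0 by rewrite mulrC EL subrr.
have FX : B' * X - M%:Z * bXM = 0 by rewrite mulrC -EX subrr.
set GG := Dm + p%:Z * X * (- (p%:Z * M%:Z) * qm) + (p%:Z * X) ^+ 2 * q2.
set Z := B' * (q1 * bML - ql * bML1) * GG + Dl * bXM * (q2 * (tau * bML + bML1) - qm * bML).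
set u := - (p%:Z * M%:Z) * ql * B' * GG + p%:Z * M%:Z * bXM * Dl * q2.
set v := bML * Dl * (- (p%:Z * M%:Z) * qm + p%:Z * X * q2).
have -> : bML * (Dl + p%:Z * M%:Z * (- (p%:Z * L%:Z) * ql) + (p%:Z * M%:Z) ^+ 2 * q1) * (B' * GG)
          - Dl * Dm * (bML * B')
        = (p%:Z * M%:Z) * (p%:Z * M%:Z) * Z
          + p%:Z * (bML * L%:Z - M%:Z * bML1) * u + p%:Z * (B' * X - M%:Z * bXM) * v.
  rewrite /Z /u /v /GG /X; ring.
rewrite FL FX !mulr0 mul0r !addr0.
rewrite -PoszM -hm /m mul0r addr0; exact: dvd_m2.
Qed.
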